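(* Let $R$ be a commutative ring with identity, $n>1$, $S=M_n(R)$. Let $A_1,A_2$ be vertices of the orthogonality graph $O(S)$, and let $c_1,c_2\in R$ be nonzero elements with $c_i\det A_i=0$ ($i=1,2$) and $c_1c_2=0$. Then $d(A_1,A_2)\le 3$.
   Context: The orthogonality graph $O(S)$ of a ring $S$ is the undirected graph whose vertices are the nonzero two-sided zero-divisors of $S$, distinct vertices $x,y$ being adjacent iff $xy=yx=0$; $d$ is the graph distance. *)

(* Defs.v *)
From HB Require Import structures.
From mathcomp Require Import all_boot all_order all_algebra.
Set Implicit Arguments. Unset Strict Implicit. Unset Printing Implicit Defensive.
Import GRing.Theory.
Local Open Scope ring_scope.

Definition OVertex (R : comNzRingType) (n : nat) (A : 'M[R]_n) : Prop :=
  A != 0 /\ (exists B : 'M[R]_n, B != 0 /\ A *m B = 0)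
         /\ (exists C : 'M[R]_n, C != 0 /\ C *m A = 0).

Definition OAdj (R : comNzRingType) (n : nat) (A B : 'M[R]_n) : Prop :=
  OVertex A /\ OVertex B /\ A != B /\ A *m B = 0 /\ B *m A = 0.

Fixpoint ODistLe (R : comNzRingType) (n : nat) (k : nat) (A B : 'M[R]_n) : Prop :=
  match k with
  | 0%N => A = B
  | k'.+1 => ODistLe k' A B \/ exists Z : 'M[R]_n, OAdj A Z /\ ODistLe k' Z B
  end.

(* Main.v *)
Require Import Defs.
From Stdlib Require Import Classical.
From HB Require Import structures.
From mathcomp Require Import all_boot all_order all_algebra fingroup perm.
Import GRing.Theory.
Local Open Scope ring_scope.

Section Aux.
Variable R : comNzRingType.

Lemma mccoy (I : R -> Prop) (k : nat) : forall (m : nat) (A : 'M[R]_(m, k)) (c : R),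
  ~ I c -> (forall g : 'I_k -> 'I_m, I (c * \det (rowsub g A))) ->
  exists u : 'cV[R]_k, (forall i, I ((A *m (c *: u)) i ord0)) /\
    exists j, ~ I (c * u j ord0).
Proof.
elim: k => [|n IH] m A c Ic H.
  have := H (fun i => match i with Ordinal _ h => False_rect _ (notF h) end).
  by rewrite det_mx00 mulr1.
pose A' := col' ord0 A.
case: (classic (forall f : 'I_n -> 'I_m, I (c * \det (rowsub f A')))) => [Hall|Hn].
  have [u' [Hu' [j Hj]]] := IH m A' c Ic Hall.
  pose u := \col_(j < n.+1) (if unlift ord0 j is Some k then u' k ord0 else 0).
  exists u; split; last first.
    by exists (lift ord0 j); rewrite mxE liftK.
  move=> i; have := Hu' i; congr I.
  rewrite !mxE big_ord_recl !mxE unlift_none mulr0 mulr0 add0r.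
  apply: eq_bigr => j' _; by rewrite !mxE liftK.
have [f Hf] := not_all_ex_not _ _ Hn.
have E : col' ord0 (rowsub f A) = rowsub f A'.
  by apply/matrixP => a b; rewrite !mxE.
pose u := \col_(j < n.+1) ((-1) ^+ j * \det (col' j (rowsub f A))).
exists u; split; last first.
  by exists ord0; rewrite mxE /= expr0 mul1r E.
move=> r.
pose g := fun i : 'I_n.+1 => if unlift ord0 i is Some k then f k else r.
have := H g; congr I.
rewrite (expand_det_row _ ord0) mxE big_distrr /=.
apply: eq_bigr => j _.
rewrite !mxE /cofactor /g unlift_none /= add0n.
have -> : row' ord0 (col' j (rowsub g A)) = col' j (rowsub f A).
  by apply/matrixP => a b; rewrite !mxE /g liftK.
by rewrite mulrCA.
Qed.

Lemma det_rowsub_sq n (A : 'M[R]_n) (g : 'I_n -> 'I_n) :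
  exists s : R, \det (rowsub g A) = s * \det A.
Proof.
case: (boolP (injectiveb g)) => [/injectiveP inj | /injectivePn [x [y nxy exy]]].
  exists ((-1) ^+ (perm inj)).
  have -> : rowsub g A = row_perm (perm inj) A.
    by apply/matrixP => a b; rewrite !mxE permE.
  by rewrite row_permE det_mulmx det_perm.
exists 0; rewrite mul0r; apply: (determinant_alternate nxy) => j.
by rewrite !mxE exy.
Qed.

Lemma ann2 n (A : 'M[R]_n) (c : R) : c != 0 -> c * \det A = 0 ->
  exists X : 'M[R]_n, X != 0 /\ A *m X = 0 /\ X *m A = 0 /\ exists U, X = c *: U.
Proof.
move=> c0 cd.
have H1 : forall g : 'I_n -> 'I_n, c * \det (rowsub g A) = 0.
  by move=> g; have [s ->] := (@det_rowsub_sq n A g); rewrite mulrCA cd mulr0.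
have [u [Hu [j0 Hj0]]] := @mccoy (fun r => r = 0) n n A c (fun h => (negP c0) (introT eqP h)) H1.
set x := c *: u in Hu.
have Ax : A *m x = 0 by apply/matrixP => i k; rewrite (ord1 k) Hu mxE.
have dx : forall i, \det A * x i ord0 = 0.
  move=> i; have : (\adj A *m A *m x) i ord0 = 0 by rewrite -mulmxA Ax mulmx0 mxE.
  by rewrite mul_adj_mx mul_scalar_mx mxE.
have Hne : ~ (forall i, 1 * x i ord0 = 0).
  by move=> h; apply: Hj0; have := h j0; rewrite mul1r mxE.
have H2 : forall g : 'I_n -> 'I_n, forall i, 1 * \det (rowsub g A^T) * x i ord0 = 0.
  by move=> g i; have [s ->] := (@det_rowsub_sq n A^T g); rewrite mul1r det_tr -mulrA dx mulr0.
have [w [Hw [l Hl]]] := @mccoy (fun r => forall i, r * x i ord0 = 0) n n A^T 1 Hne H2.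
have [i0 Hi0] := not_all_ex_not _ _ Hl.
rewrite /x in Ax Hw Hi0 *.
exists ((c *: u) *m (1 *: w)^T); split; last split; last split.
- apply/eqP => /matrixP /(_ i0 l); rewrite !mxE big_ord1 !mxE => h.
  by apply: Hi0; rewrite /x mxE mulrC.
- by rewrite mulmxA Ax mul0mx.
- have E : (1 *: w)^T *m A = (A^T *m (1 *: w))^T by rewrite trmx_mul trmxK.
  apply/matrixP => i j; rewrite -mulmxA E.
  rewrite !mxE big_ord1 !mxE.
  by have := Hw j i; rewrite !mxE mulrC.
- by exists (u *m (1 *: w)^T); rewrite scalemxAl.
Qed.

Lemma odist_mono n k (A B : 'M[R]_n) : ODistLe k A B -> ODistLe k.+1 A B.
Proof. by move=> h; left. Qed.

Lemma odist_step n k (X Y B : 'M[R]_n) : X != 0 -> Y != 0 -> X *m Y = 0 -> Y *m X = 0 ->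
  ODistLe k Y B -> ODistLe k.+1 X B.
Proof.
move=> X0 Y0 XY YX h; case: (eqVneq X Y) => [-> | nXY]; first by left.
right; exists Y; split => //.
split; first by split => //; split; [exists Y | exists Y].
split; first by split => //; split; [exists X | exists X].
by [].
Qed.

End Aux.

Theorem lemma3 (R : comNzRingType) (n : nat) (hn : (1 < n)%N)
    (A1 A2 : 'M[R]_n) (c1 c2 : R) :
  OVertex A1 -> OVertex A2 ->
  c1 != 0 -> c2 != 0 ->
  c1 * \det A1 = 0 -> c2 * \det A2 = 0 -> c1 * c2 = 0 ->
  ODistLe 3 A1 A2.
Proof.
move=> [A10 _] [A20 _] c10 c20 d1 d2 c12.
have [X1 [X10 [AX1 [XA1 [U1 EU1]]]]] := @ann2 R n A1 c1 c10 d1.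
have [X2 [X20 [AX2 [XA2 [U2 EU2]]]]] := @ann2 R n A2 c2 c20 d2.
apply: (@odist_step R n 2 _ _ _ A10 X10 AX1 XA1).
apply: (@odist_step R n 1 _ _ _ X10 X20).
- by rewrite EU1 EU2 -scalemxAl -scalemxAr scalerA c12 scale0r.
- by rewrite EU1 EU2 -scalemxAl -scalemxAr scalerA mulrC c12 scale0r.
apply: (@odist_step R n 0 _ _ _ X20 A20 XA2 AX2).
by [].
Qed.
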